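(* Let $T$ be a complete, model complete, o-minimal $\mathcal L$-theory extending the theory of real closed ordered fields, with $T$ power bounded, and let $K=(K,\mathcal O,\partial)$ be a $T$-convex $T$-differential field with nontrivial derivation and nontrivial valuation, value group $\Gamma$. Let $\alpha\in\Gamma$. If $\alpha-\epsilon\in\Gamma(\partial)$ for each $\epsilon\in\Gamma^{>0}$, then $\alpha\in\Gamma(\partial)$.
   Context: $\mathcal L\supseteq\{0,1,+,-,\cdot,<\}$. A $T$-convex valuation ring of $K\models T$ is a nonempty convex $\mathcal O\subseteq K$ with $G(\mathcal O)\subseteq\mathcal O$ for all $\mathcal L(\emptyset)$-definable continuous $G\colon K\to K$; $\mathfrak o$ its maximal ideal, $v\colon K^\times\to\Gamma$ the valuation. A $T$-derivation is a map $\partial\colon K\to K$ with $\partial(G(u))=\mathbf J_G(u)\partial u$ for all $\mathcal L(\emptyset)$-definable $\mathcal C^1$ maps $G$ on open subsets of $K^n$; $(K,\mathcal O,\partial)$ is a $T$-convex $T$-differential field if moreover $\partial$ is continuous for the valuation topology. $\Gamma(\partial):=\{v\phi:\phi\in K^\times,\ \partial\mathfrak o\subseteq\phi\mathfrak o\}$. $T$ power bounded: every $\mathcal L(K)$-definable unary function is eventually bounded in absolute value by some $\mathcal L(K)$-definable endomorphism of $(K^{>0},\cdot)$. *)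

(* Defs.v *)
(* Semantic encoding of an o-minimal expansion K of a real
   closed field: D n is the collection of L(emptyset)-definable subsets of K^n
   (points of K^n are functions 'I_n -> K). *)
From mathcomp Require Import all_boot all_order all_algebra.
Set Implicit Arguments. Unset Strict Implicit. Unset Printing Implicit Defensive.
Import Order.TTheory GRing.Theory Num.Theory.
Local Open Scope ring_scope.

Section Defs.
Variable K : rcfType.

Definition tcat n m (x : 'I_n -> K) (y : 'I_m -> K) : 'I_(n + m) -> K :=
  fun i => match split i with inl j => x j | inr j => y j end.

Definition defsys := forall n : nat, (('I_n -> K) -> Prop) -> Prop.

(* D is the system of parameter-free definable sets of an expansion of the
   ordered field K (van den Dries' notion of a "structure" on K). *)
Record is_struct (D : defsys) : Prop := {
  st_full : forall n, D n (fun _ => True);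
  st_compl : forall n A, D n A -> D n (fun x => ~ A x);
  st_union : forall n A B, D n A -> D n B -> D n (fun x => A x \/ B x);
  st_prodr : forall n m A, D n A -> D (n + m) (fun x => A (fun j => x (lshift m j)));
  st_prodl : forall n m A, D m A -> D (n + m) (fun x => A (fun j => x (rshift n j)));
  st_diag : forall n (i j : 'I_n), D n (fun x => x i = x j);
  st_proj : forall n m A, D (n + m) A -> D n (fun x => exists y, A (tcat x y));
  st_add : D 3 (fun x => x ord0 + x (inord 1) = x (inord 2));
  st_mul : D 3 (fun x => x ord0 * x (inord 1) = x (inord 2));
  st_lt : D 2 (fun x => x ord0 < x (inord 1))
}.

Definition pdef (D : defsys) n (A : ('I_n -> K) -> Prop) : Prop :=
  exists m (B : ('I_(n + m) -> K) -> Prop) (c : 'I_m -> K),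
    D (n + m) B /\ forall x, A x <-> B (tcat x c).

(* cells of K: a point, or an open interval with endpoints in K U {-oo,+oo}
   (None = infinite endpoint) *)
Definition cell := (K + (option K * option K))%type.
Definition in_cell (c : cell) (x : K) : Prop :=
  match c with
  | inl p => x = p
  | inr (a, b) => (forall a', a = Some a' -> a' < x) /\
                  (forall b', b = Some b' -> x < b')
  end.

Definition o_minimal (D : defsys) : Prop :=
  forall A : ('I_1 -> K) -> Prop, pdef D A ->
    exists k (c : 'I_k -> cell), forall x, A (fun _ => x) <-> exists i, in_cell (c i) x.

Definition power_bounded (D : defsys) : Prop :=
  forall f : K -> K, pdef D (fun x : 'I_2 -> K => x (inord 1) = f (x ord0)) ->
    exists g : K -> K,
      pdef D (fun x : 'I_2 -> K => 0 < x ord0 /\ x (inord 1) = g (x ord0)) /\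
      (forall x, 0 < x -> 0 < g x) /\
      (forall x y, 0 < x -> 0 < y -> g (x * y) = g x * g y) /\
      exists a, forall x, a < x -> `|f x| <= g x.

Definition cont1 (G : K -> K) : Prop :=
  forall a e, 0 < e -> exists d, 0 < d /\
    forall x, `|x - a| < d -> `|G x - G a| < e.

Definition Tconvex (D : defsys) (O : K -> Prop) : Prop :=
  (exists x, O x) /\
  (forall x y z, O x -> O z -> x <= y -> y <= z -> O y) /\
  (forall G : K -> K, D 2 (fun x => x (inord 1) = G (x ord0)) -> cont1 G ->
     forall x, O x -> O (G x)).

Definition maxideal (O : K -> Prop) (x : K) : Prop :=
  O x /\ (x = 0 \/ ~ O x^-1).

Definition open_set n (U : ('I_n -> K) -> Prop) : Prop :=
  forall u, U u -> exists d, 0 < d /\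
    forall x, (forall i, `|x i - u i| < d) -> U x.

Definition C1_on n (U : ('I_n -> K) -> Prop) (G : ('I_n -> K) -> K)
    (J : ('I_n -> K) -> 'I_n -> K) : Prop :=
  forall u, U u ->
    (forall e, 0 < e -> exists d, 0 < d /\ forall x, U x ->
        (forall i, `|x i - u i| < d) ->
        `|G x - G u - \sum_(i < n) J u i * (x i - u i)|
          <= e * \sum_(i < n) `|x i - u i|) /\
    (forall i e, 0 < e -> exists d, 0 < d /\ forall x, U x ->
        (forall j, `|x j - u j| < d) -> `|J x i - J u i| < e).

Definition T_derivation (D : defsys) (dd : K -> K) : Prop :=
  forall n (U : ('I_n -> K) -> Prop) (G : ('I_n -> K) -> K)
         (J : ('I_n -> K) -> 'I_n -> K),
    open_set U -> D n U ->
    D (n + 1) (fun x => U (fun j => x (lshift 1 j)) /\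
                        x (rshift n ord0) = G (fun j => x (lshift 1 j))) ->
    C1_on U G J ->
    forall u, U u -> dd (G u) = \sum_(i < n) J u i * dd (u i).

(* continuity of dd for the valuation topology *)
Definition vcont (O : K -> Prop) (dd : K -> K) : Prop :=
  forall a c, c != 0 -> exists d, d != 0 /\
    forall x, maxideal O ((x - a) / d) -> maxideal O ((dd x - dd a) / c).

Definition v_eq (O : K -> Prop) (x y : K) : Prop := O (x / y) /\ O (y / x).

(* v a \in Gamma(dd), for a representative a != 0 of an element of Gamma *)
Definition in_Gamma_d (O : K -> Prop) (dd : K -> K) (a : K) : Prop :=
  exists phi, phi != 0 /\ v_eq O phi a /\
    forall u, maxideal O u -> maxideal O (dd u / phi).

End Defs.

(* Main.v *)
Require Import Defs.
From mathcomp Require Import all_boot all_order all_algebra.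
From Stdlib Require Import Classical FunctionalExtensionality PropExtensionality.
Import Order.TTheory GRing.Theory Num.Theory.
Local Open Scope ring_scope.
Local Open Scope ring_scope.

Section Dfn.
Variable K : rcfType.
Variable D : defsys K.
Hypothesis HD : is_struct D.

Lemma Dext n (A B : ('I_n -> K) -> Prop) : (forall x, A x <-> B x) -> D n A -> D n B.
Proof.
move=> AB; have -> : B = A; last by [].
apply: functional_extensionality => x; apply: propositional_extensionality.
by split => /AB.
Qed.

Lemma tcatL n m (x : 'I_n -> K) (y : 'I_m -> K) j : tcat x y (lshift m j) = x j.
Proof. by rewrite /tcat -[lshift m j]/(unsplit (inl j)) unsplitK. Qed.

Lemma tcatR n m (x : 'I_n -> K) (y : 'I_m -> K) j : tcat x y (rshift n j) = y j.
Proof. by rewrite /tcat -[rshift n j]/(unsplit (inr j)) unsplitK. Qed.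

Lemma Dand n A B : D n A -> D n B -> D n (fun x => A x /\ B x).
Proof.
move=> hA hB.
apply: (@Dext _ (fun x => ~ ((~ A x) \/ (~ B x)))).
  move=> x; split; first by move=> h; split; apply: NNPP => h'; apply: h; [left|right].
  by case=> a b [].
by apply: st_compl => //; apply: st_union => //; apply: st_compl.
Qed.

Lemma Dall n m (P : 'I_m -> ('I_n -> K) -> Prop) :
  (forall j, D n (P j)) -> D n (fun x => forall j, P j x).
Proof.
elim: m P => [|m IH] P hP.
  apply: (@Dext _ (fun _ => True)); last exact: st_full.
  by move=> x; split => // _ [].
apply: (@Dext _ (fun x => P ord0 x /\ forall j : 'I_m, P (lift ord0 j) x)).
  move=> x; split; last by move=> h; split => // j; apply: h.
  case=> h0 h j; have [j' ->|->] := unliftP ord0 j; [exact: h|exact: h0].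
apply: Dand => //; exact: (IH (fun j => P (lift ord0 j))).
Qed.

Lemma rename m n (s : 'I_m -> 'I_n) A : D m A -> D n (fun x => A (fun j => x (s j))).
Proof.
move=> hA.
have hB : D (n + m) (fun z => A (fun j => z (rshift n j)) /\
                      forall j : 'I_m, z (lshift m (s j)) = z (rshift n j)).
  apply: Dand; first exact: (st_prodl HD n hA).
  by apply: Dall => j; apply: st_diag.
have := st_proj HD hB; apply: Dext => x; split.
  case=> y [hy h].
  have E : (fun j => tcat x y (rshift n j)) = (fun j => x (s j)).
    apply: functional_extensionality => j; rewrite tcatR.
    by have := h j; rewrite tcatL tcatR.
  by rewrite -E.
move=> h; exists (fun j => x (s j)); split.
  have E : (fun j => tcat x (fun j => x (s j)) (rshift n j)) = (fun j => x (s j)).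
    by apply: functional_extensionality => j; rewrite tcatR.
  by rewrite E.
by move=> j; rewrite tcatL tcatR.
Qed.

Arguments rename {m n} s {A}.
Arguments Dext {n A B}.

Lemma Dex1 n A : D (n + 1) A -> D n (fun x => exists y, A (tcat x (fun _ : 'I_1 => y))).
Proof.
move=> hA; have := st_proj HD hA; apply: Dext => x; split.
  case=> y h; exists (y ord0).
  have E : (fun _ => y ord0) = y by apply: functional_extensionality => j; rewrite (ord1 j).
  by rewrite E.
by case=> y h; exists (fun _ => y).
Qed.

Definition s3 n (i j k : 'I_n) (t : 'I_3) := if nat_of_ord t == 0%N then i else if nat_of_ord t == 1%N then j else k.
Arguments s3 {n}.

Lemma s3_0 n (i j k : 'I_n) : s3 i j k ord0 = i. Proof. by []. Qed.
Lemma s3_1 n (i j k : 'I_n) : s3 i j k (inord 1) = j. Proof. by rewrite /s3 inordK. Qed.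
Lemma s3_2 n (i j k : 'I_n) : s3 i j k (inord 2) = k. Proof. by rewrite /s3 inordK. Qed.

Lemma Dadd n (i j k : 'I_n) : D n (fun x => x i + x j = x k).
Proof.
have := rename (s3 i j k) (st_add HD); apply: Dext => x.
by rewrite s3_0 s3_1 s3_2.
Qed.

Lemma Dmul n (i j k : 'I_n) : D n (fun x => x i * x j = x k).
Proof.
have := rename (s3 i j k) (st_mul HD); apply: Dext => x.
by rewrite s3_0 s3_1 s3_2.
Qed.

Arguments Dadd {n}. Arguments Dmul {n}. Arguments Dex1 {n A}. Arguments Dand {n A B}.

Lemma G_zero : D 2 (fun x => x (inord 1) = 0).
Proof.
have := Dadd (inord 1 : 'I_2) (inord 1) (inord 1); apply: Dext => x; split.
  by move/eqP; rewrite -subr_eq0 addrK => /eqP.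
by move=> ->; rewrite addr0.
Qed.

Lemma G_one : D 2 (fun x => x (inord 1) = 1).
Proof.
have := Dand (Dmul (inord 1 : 'I_2) (inord 1) (inord 1)) (st_compl HD (Dadd (inord 1 : 'I_2) (inord 1) (inord 1))).
apply: Dext => x; split.
  case=> /eqP h1 h2; move: h1; rewrite -subr_eq0 -{3}[x _]mulr1 -mulrBr mulf_eq0 subr_eq0.
  case/orP => /eqP // h; by exfalso; apply: h2; rewrite h addr0.
move=> ->; rewrite mulr1; split => //.
by move/eqP; rewrite -subr_eq0 addrK oner_eq0.
Qed.

Lemma G_sq : D 2 (fun x => x (inord 1) = x ord0 * x ord0).
Proof. by have := Dmul (ord0 : 'I_2) ord0 (inord 1); apply: Dext => x; split. Qed.

Lemma G_dbl : D 2 (fun x => x (inord 1) = x ord0 + x ord0).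
Proof. by have := Dadd (ord0 : 'I_2) ord0 (inord 1); apply: Dext => x; split. Qed.

Lemma G_neg : D 2 (fun x => x (inord 1) = - x ord0).
Proof.
pose a : 'I_(2 + 1) := lshift 1 ord0.
pose b : 'I_(2 + 1) := lshift 1 (inord 1).
pose w : 'I_(2 + 1) := rshift 2 ord0.
have := Dex1 (Dand (Dadd a b w) (Dadd w w w)).
apply: Dext => x; split.
  case=> y; rewrite /a /b /w !tcatL !tcatR; case=> [h1 /eqP h2]; move: h2; rewrite -subr_eq0 addrK => /eqP h2.
  suff e : x (inord 1 : 'I_2) = - x (ord0 : 'I_2) by exact: e.
  by move: h1; rewrite h2 => /eqP; rewrite addr_eq0 => /eqP ->; rewrite opprK.
move=> h; have e : x (inord 1 : 'I_2) = - x (ord0 : 'I_2) by exact: h.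
exists 0; rewrite /a /b /w !tcatL !tcatR e addr0 subrr; split => //; rewrite addrC subrr.
Qed.

Lemma G_cube : D (1 + 1) (fun x => True /\ x (rshift 1 ord0) =
   (fun u : 'I_1 -> K => u ord0 * u ord0 * u ord0) (fun j => x (lshift 1 j))).
Proof.
pose a : 'I_(1 + 1 + 1) := lshift 1 (lshift 1 ord0).
pose b : 'I_(1 + 1 + 1) := lshift 1 (rshift 1 ord0).
pose w : 'I_(1 + 1 + 1) := rshift (1 + 1) ord0.
have := Dex1 (Dand (Dmul a a w) (Dmul w a b)).
apply: Dext => x; split.
  case=> y; rewrite /a /b /w !tcatL !tcatR; case=> [h1 h2]; split => //.
  have e := etrans (esym h2) (congr1 (fun t => t * _) (esym h1)); exact: e.
case=> _ h; exists (x (lshift 1 ord0) * x (lshift 1 ord0)); rewrite /a /b /w !tcatL !tcatR.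
by split => //; exact: esym h.
Qed.
End Dfn.
From mathcomp Require Import ring lra.
Section An.
Variable K : rcfType.

Lemma small (c e : K) : 0 <= c -> 0 < e ->
  exists d, 0 < d /\ forall h, 0 <= h -> h < d -> h * (h + c) < e.
Proof.
move=> c0 e0; exists (e / (e + 1 + c)).
have p : 0 < e + 1 + c by lra.
have dE : e / (e + 1 + c) * (e + 1 + c) = e by rewrite mulfVK // gt_eqF.
set d := e / (e + 1 + c) in dE *.
have d0 : 0 < d by rewrite /d divr_gt0.
split => // h h0 hd.
have d1 : d < 1 by nra.
nra.
Qed.

Lemma cont_const (c : K) : cont1 (fun _ => c).
Proof. by move=> a e e0; exists 1; split => // x _; rewrite subrr normr0. Qed.

Lemma cont_neg : cont1 (fun x : K => - x).
Proof.
move=> a e e0; exists e; split => // x h.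
by rewrite (_ : - x - - a = - (x - a)) ?normrN //; ring.
Qed.

Lemma cont_dbl : cont1 (fun x : K => x + x).
Proof.
move=> a e e0; exists (e / 2); split; first by rewrite divr_gt0.
move=> x h; rewrite (_ : x + x - (a + a) = 2 * (x - a)); last by ring.
rewrite normrM ger0_norm //; move: h; set t := `|x - a|; move=> h.
have : e / 2 * 2 = e by rewrite mulfVK // pnatr_eq0.
nra.
Qed.

Lemma cont_sq : cont1 (fun x : K => x * x).
Proof.
move=> a e e0; have [d [d0 hd]] := small _ _ (mulr_ge0 (ler0n _ 2) (normr_ge0 a)) e0.
exists d; split => // x h.
rewrite (_ : x * x - a * a = (x - a) * ((x - a) + 2 * a)); last by ring.
rewrite normrM; apply: le_lt_trans (hd _ (normr_ge0 _) h).
apply: ler_wpM2l => //.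
by apply: le_trans (ler_normD _ _) _; rewrite normrM ger0_norm.
Qed.

Lemma C1_cube : C1_on (fun _ : 'I_1 -> K => True)
   (fun u : 'I_1 -> K => u ord0 * u ord0 * u ord0)
   (fun u _ => 3 * (u ord0 * u ord0)).
Proof.
move=> u _; set a := u ord0; split.
  move=> e e0; have [d [d0 hd]] := small _ _ (mulr_ge0 (ler0n _ 3) (normr_ge0 a)) e0.
  exists d; split => // x _ hx; rewrite !big_ord1; set b := x ord0.
  have hb : `|b - a| < d by exact: hx.
  rewrite (_ : b * b * b - a * a * a - 3 * (a * a) * (b - a) = (b - a) * ((b - a) * ((b - a) + 3 * a))); last by ring.
  rewrite !normrM -/a [e * _]mulrC; apply: ler_wpM2l => //.
  have H := hd _ (normr_ge0 _) hb.
  have tri : `|b - a + 3 * a| <= `|b - a| + 3 * `|a|.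
    by apply: le_trans (ler_normD _ _) _; rewrite normrM ger0_norm.
  exact: le_trans (ler_wpM2l (normr_ge0 _) tri) (ltW H).
move=> i e e0.
have e30 : 0 < e / 3 by rewrite divr_gt0.
have [d [d0 hd]] := small _ _ (mulr_ge0 (ler0n _ 2) (normr_ge0 a)) e30.
exists d; split => // x _ hx; set b := x ord0.
have hb : `|b - a| < d by exact: hx.
rewrite (_ : 3 * (b * b) - 3 * (a * a) = 3 * ((b - a) * ((b - a) + 2 * a))); last by ring.
rewrite normrM ger0_norm //.
have : `|(b - a) * (b - a + 2 * a)| < e / 3.
  apply: le_lt_trans (hd _ (normr_ge0 _) hb); rewrite normrM; apply: ler_wpM2l => //.
  by apply: le_trans (ler_normD _ _) _; rewrite normrM ger0_norm.
have : e / 3 * 3 = e by rewrite mulfVK // pnatr_eq0.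
set t := `|_|; nra.
Qed.
End An.
From Stdlib Require Import Classical.
Section Ofacts.
Variable K : rcfType.
Variable D : defsys K.
Hypothesis HD : is_struct D.
Variable O : K -> Prop.
Hypothesis HT : Tconvex D O.

Lemma Tc (G : K -> K) : D 2 (fun x => x (inord 1) = G (x ord0)) -> cont1 G ->
  forall x, O x -> O (G x).
Proof. exact: HT.2.2 G. Qed.

Lemma Oconv x y z : O x -> O z -> x <= y -> y <= z -> O y.
Proof. exact: HT.2.1. Qed.
Arguments Oconv {x y z}.

Lemma O0 : O 0.
Proof. have [z Oz] := HT.1; exact: (Tc (fun _ => 0) (@G_zero K D HD) (@cont_const K 0) _ Oz). Qed.

Lemma O1 : O 1.
Proof. have [z Oz] := HT.1; exact: (Tc (fun _ => 1) (@G_one K D HD) (@cont_const K 1) _ Oz). Qed.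

Lemma Oneg x : O x -> O (- x).
Proof. exact: (Tc (fun x => - x) (@G_neg K D HD) (@cont_neg K)). Qed.
Arguments Oneg {x}.

Lemma Osq x : O x -> O (x * x).
Proof. exact: (Tc (fun x => x * x) (@G_sq K D HD) (@cont_sq K)). Qed.
Arguments Osq {x}.

Lemma Odbl x : O x -> O (x + x).
Proof. exact: (Tc (fun x => x + x) (@G_dbl K D HD) (@cont_dbl K)). Qed.
Arguments Odbl {x}.

Lemma OV x : ~ O x -> O x^-1.
Proof.
move=> nO.
have x1 : 1 < `|x|.
  rewrite ltNge; apply/negP; rewrite ler_norml => /andP [h1 h2].
  by apply: nO; apply: (Oconv (Oneg O1) O1).
have : `|x^-1| <= 1.
  rewrite normfV; apply/ltW; rewrite invf_lt1 //; lra.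
rewrite ler_norml => /andP [h1 h2].
exact: (Oconv (Oneg O1) O1).
Qed.

Lemma Om x y : O x -> O y -> O (x * y).
Proof.
move=> Ox Oy.
have key : forall x y, O y -> `|x| <= `|y| -> O (x * y).
  move=> x0 y0 Oy0 hxy.
  have hm : `|x0 * y0| <= y0 * y0.
    rewrite normrM; apply: le_trans (ler_wpM2r (normr_ge0 y0) hxy) _.
    by rewrite -normrM ger0_norm // -expr2 sqr_ge0.
  move: hm; rewrite ler_norml => /andP [h1 h2].
  exact: (Oconv (Oneg (Osq Oy0)) (Osq Oy0)).
case: (leP `|x| `|y|) => h; first exact: key.
rewrite mulrC; apply: key => //; exact: ltW.
Qed.

Lemma O3 : O 3%:R.
Proof.
apply: (Oconv O0 (Odbl (Odbl O1))); lra.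
Qed.

End Ofacts.

Lemma cube_root (K : rcfType) (y : K) : exists w, w * w * w = y.
Proof.
set r := `|y| + 1.
have r1 : 1 <= r by rewrite /r lerDr.
have yr : - r < y < r.
  by rewrite -ltr_norml /r ltrDl.
have := @poly_ivt K ('X^3 - y%:P) (- r) r.
rewrite !hornerE.
case.
- lra.
- case/andP: yr => h1 h2; apply/andP; split; nra.
- move=> w _; rewrite rootE !hornerE subr_eq0 => /eqP h; exists w.
  by rewrite -h; ring.
Qed.

Theorem lemma3p8 (K : rcfType) (D : defsys K) (O : K -> Prop) (dd : K -> K) :
  is_struct D -> o_minimal D -> power_bounded D ->
  Tconvex D O -> T_derivation D dd -> vcont O dd ->
  (exists x, dd x != 0) -> (exists x, ~ O x) ->
  forall a : K, a != 0 ->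
    (forall e : K, e != 0 -> maxideal O e -> in_Gamma_d O dd (a / e)) ->
    in_Gamma_d O dd a.
Proof.
move=> HD _ _ HT HTd _ _ _ a a0 H.
have O0' := @O0 K D HD O HT.
have O1' := @O1 K D HD O HT.
have O3' := @O3 K D HD O HT.
have OV' := @OV K D HD O HT.
have Om' : forall x y, O x -> O y -> O (x * y) := @Om K D HD O HT.
have S1 : forall u, maxideal O u -> O (dd u / a).
  move=> u mu; apply: NNPP => nO.
  have du0 : dd u != 0.
    by apply/eqP => e; apply: nO; rewrite e mul0r.
  set e := a / dd u.
  have e0 : e != 0 by rewrite mulf_neq0 // invr_eq0.
  have einv : e^-1 = dd u / a by rewrite invf_div.
  have me : maxideal O e.
    split; last by right; rewrite einv.
    by rewrite -[e]invrK einv; exact: OV' _ nO.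
  have [psi [psi0 [[v1 v2] hpsi]]] := H e e0 me.
  have ae : a / e = dd u by rewrite /e invf_div mulrC divfK.
  rewrite ae in v1 v2.
  case: (hpsi u mu) => _ [/eqP|].
    by rewrite mulf_eq0 invr_eq0 (negbTE du0) (negbTE psi0).
  by apply; rewrite invf_div.
exists a; split => //; split.
  by rewrite /v_eq divff //; split.
move=> u mu; have [w hw] := cube_root K u.
have dE : dd u = 3%:R * (w * w) * dd w.
  have op : open_set (fun _ : 'I_1 -> K => True).
    by move=> v _; exists 1; split.
  have := HTd 1%N (fun _ => True) (fun u => u ord0 * u ord0 * u ord0)
    (fun u _ => 3%:R * (u ord0 * u ord0)) op (st_full HD 1%N) (@G_cube K D HD)
    (@C1_cube K) (fun _ => w) I.
  by rewrite big_ord1 /= hw.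
case: (eqVneq w 0) => [w0|w0].
  have -> : dd u / a = 0 by rewrite dE w0 !(mul0r, mulr0).
  by split; [exact: O0' | left].
have u0 : u != 0 by rewrite -hw !mulf_neq0.
case: mu => Ou [/eqP|nOu']; first by rewrite (negbTE u0).
have Ow : O w.
  apply: NNPP => nOw; have Owi := OV' _ nOw.
  have e : u * w^-1 * w^-1 = w by rewrite -hw !mulfK.
  by apply: nOw; rewrite -e; exact: Om' (Om' _ _ Ou Owi) Owi.
have nOwi : ~ O w^-1.
  move=> Owi; apply: nOu'.
  have -> : u^-1 = w^-1 * w^-1 * w^-1 by rewrite -hw !invfM.
  exact: Om' (Om' _ _ Owi Owi) Owi.
have Oq := S1 w (conj Ow (or_intror nOwi)).
have e2 : dd u / a = 3%:R * (w * w) * (dd w / a) by rewrite dE -!mulrA.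
split.
  by rewrite e2; exact: Om' (Om' _ _ O3' (Om' _ _ Ow Ow)) Oq.
case: (eqVneq (dd u) 0) => [->|du0]; first by left; rewrite mul0r.
right => Oi; apply: nOwi.
have dw0 : dd w != 0 by apply/eqP => h; move: du0; rewrite dE h mulr0 eqxx.
have -> : w^-1 = (dd u / a)^-1 * 3%:R * w * (dd w / a).
  rewrite dE; field.
  by rewrite a0 w0 dw0.
exact: Om' (Om' _ _ (Om' _ _ Oi O3') Ow) Oq.
Qed.
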